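(* Let $P\in\mathbb{C}^{m\times m}$ be positive definite. Then for every Hermitian $H\in\mathbb{C}^{m\times m}$ with $\mathrm{tr}(H)=0$, $$\frac{\mathrm{tr}(H^2P)}{\mathrm{tr}(P)}-\frac{\mathrm{tr}(HP)^2}{\mathrm{tr}(P)^2}\ \ge\ \frac{\|H\|_F^2}{\mathrm{tr}(P)\,\mathrm{tr}(P^{-1})}.$$ *)

(* Defs.v *)
(* C : numClosedFieldType plays the role of the complex numbers. *)
From HB Require Import structures.
From mathcomp Require Import all_boot all_order all_algebra.
Set Implicit Arguments. Unset Strict Implicit. Unset Printing Implicit Defensive.
Import Order.TTheory GRing.Theory Num.Theory.
Local Open Scope ring_scope.

Definition hermitian_mx (C : numClosedFieldType) (m : nat) (M : 'M[C]_m) : Prop :=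
  M = map_mx Num.conj (M^T).

Definition posdef_mx (C : numClosedFieldType) (m : nat) (P : 'M[C]_m) : Prop :=
  hermitian_mx P /\
  forall x : 'cV[C]_m, x != 0 -> 0 < (map_mx Num.conj (x^T) *m P *m x) 0 0.

Definition frob_norm2 (C : numClosedFieldType) (m : nat) (M : 'M[C]_m) : C :=
  \sum_(i < m) \sum_(j < m) `|M i j| ^+ 2.

(* Main.v *)
Require Import Defs.
From HB Require Import structures.
From mathcomp Require Import all_boot all_order all_algebra.
From mathcomp Require Import sesquilinear spectral.
From mathcomp Require Import ring.
Import Order.TTheory GRing.Theory Num.Theory.
Local Open Scope ring_scope.

Section Aux.
Variable C : numClosedFieldType.
Local Notation ct M := (map_mx Num.conj (trmx M)).

Lemma frobE n (M : 'M[C]_n) : hermitian_mx M -> frob_norm2 M = \tr (M *m M).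
Proof.
move=> hM; rewrite /frob_norm2 /mxtrace; apply: eq_bigr => i _.
rewrite mxE; apply: eq_bigr => j _.
rewrite normCK; congr (_ * _); by rewrite {2}hM !mxE.
Qed.

Lemma diag_ge0 n p (W : 'M[C]_(n,p)) i : 0 <= (W *m ct W) i i.
Proof.
rewrite mxE; apply: sumr_ge0 => j _; rewrite !mxE -normCK; exact: exprn_ge0.
Qed.

Lemma ctM n p q (A : 'M[C]_(n,p)) (B : 'M[C]_(p,q)) : ct (A *m B) = ct B *m ct A.
Proof. by rewrite trmx_mul map_mxM. Qed.

Lemma ctK n p (A : 'M[C]_(n,p)) : ct (ct A) = A.
Proof. by apply/matrixP => i j; rewrite !mxE conjCK. Qed.

Lemma tr_ct n (M : 'M[C]_n) : \tr (ct M) = (\tr M)^*.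
Proof. rewrite /mxtrace rmorph_sum; apply: eq_bigr => i _; by rewrite !mxE. Qed.

Lemma ct_delta n (i : 'I_n) : ct (delta_mx i (0 : 'I_1) : 'M[C]_(n,1)) = delta_mx 0 i.
Proof. by apply/matrixP => a b; rewrite !mxE rmorph_nat andbC. Qed.

End Aux.

Theorem mainTheorem11 (C : numClosedFieldType) (m : nat) (P : 'M[C]_m) :
  posdef_mx P ->
  forall H : 'M[C]_m, hermitian_mx H -> \tr H = 0 ->
    frob_norm2 H / (\tr P * \tr (invmx P))
      <= \tr (H *m H *m P) / \tr P - (\tr (H *m P)) ^+ 2 / (\tr P) ^+ 2.
Proof.
case: m P => [|n] P [hPh hPpos] H hH htr.
  by rewrite /frob_norm2 /mxtrace !big_ord0 !mul0r expr0n /= !mul0r subrr.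
set U := spectralmx P; set d := spectral_diag P.
have Uu : U \is unitarymx := spectral_unitarymx P.
have UUt : U *m map_mx Num.conj (U^T) = 1%:M := unitarymxP Uu.
have UtU : map_mx Num.conj (U^T) *m U = 1%:M := mulmx1C UUt.
have Pn : P \is normalmx by apply/normalmxP; rewrite -hPh.
have hPd : P = map_mx Num.conj (U^T) *m diag_mx d *m U.
  by rewrite -invmx_unitary //; apply/orthomx_spectralP.
have dpos : forall i, 0 < d 0 i.
  move=> i; set x := map_mx Num.conj (U^T) *m delta_mx i (0:'I_1).
  have x0 : x != 0.
    apply/eqP => hx; have := congr1 (mulmx U) hx.
    rewrite mulmxA UUt mul1mx mulmx0.
    move/matrixP/(_ i 0); rewrite !mxE !eqxx /= => /eqP; by rewrite oner_eq0.
  have := hPpos x x0.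
  rewrite /x ctM ctK hPd !mulmxA !mulmxtVK // ct_delta -rowE -colE.
  by rewrite !mxE eqxx mulr1n.
set Ut := map_mx Num.conj (U^T).
set d' := map_mx GRing.inv d.
have DD : diag_mx d *m diag_mx d' = 1%:M.
  apply/matrixP => a b; rewrite mul_mx_diag !mxE.
  case: (eqVneq a b) => [->|nab]; last by rewrite !mulr0n mul0r.
  by rewrite !mulr1n mulfV // gt_eqF.
have PQ : P *m (Ut *m diag_mx d' *m U) = 1%:M.
  rewrite hPd !mulmxA mulmxtVK // -(mulmxA Ut (diag_mx d)) DD mulmx1 UtU //.
have Punit := (mulmx1_unit PQ).1.
have hinv : invmx P = Ut *m diag_mx d' *m U.
  by rewrite -[RHS](mulKmx Punit) PQ mulmx1.
set T := \sum_i (d 0 i)^-1.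
set S := \sum_i d 0 i.
have hT : \tr (invmx P) = T.
  rewrite hinv mxtrace_mulC mulmxA UUt mul1mx mxtrace_diag.
  by apply: eq_bigr => i _; rewrite mxE.
have hS : \tr P = S.
  rewrite hPd mxtrace_mulC mulmxA UUt mul1mx mxtrace_diag //.

have Spos : 0 < S.
  by rewrite /S (bigD1 (ord0 : 'I_n.+1)) //= ltr_pwDl ?dpos // sumr_ge0 // => i _; apply: ltW.
have dT : forall i, 1 <= d 0 i * T.
  move=> i; rewrite -(mulfV (lt0r_neq0 (dpos i))); apply: ler_wpM2l; first exact: ltW.
  rewrite /T (bigD1 i) //= lerDl sumr_ge0 // => j _.
  by rewrite invr_ge0 ltW.
have Tpos : 0 < T.
  by rewrite /T (bigD1 (ord0 : 'I_n.+1)) //= ltr_pwDl ?invr_gt0 ?dpos // sumr_ge0 // => i _; rewrite invr_ge0 ltW.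
rewrite hS hT frobE //.
set Y := \tr (H *m P).
have hY : Y^* = Y.
  by rewrite /Y -tr_ct ctM -hPh -hH mxtrace_mulC.
have hSr : S^* = S.
  by apply/eqP; rewrite -CrealE gtr0_real.
set mu := Y / S.
have hmu : mu^* = mu.
  rewrite /mu rmorphM fmorphV; exact: (congr2 (fun a b => a / b) hY hSr).
set G := H - mu%:M.
have hG : map_mx Num.conj (G^T) = G.
  by rewrite /G linearB /= tr_scalar_mx map_mxB /= map_scalar_mx /= hmu -hH.
have GGP : \tr (G *m G *m P) = \tr (H *m H *m P) - mu ^+ 2 * S.
  rewrite /G mulmxBl !mulmxBr mul_scalar_mx mul_mx_scalar -scalar_mxM.
  rewrite !mulmxBl -!scalemxAl mul_scalar_mx !linearB /= !mxtraceZ hS -/Y.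
  have S0 : S != 0 by exact: lt0r_neq0.
  by rewrite /mu; field.
have GG : \tr (G *m G) = \tr (H *m H) + mu ^+ 2 * n.+1%:R.
  rewrite /G mulmxBl !mulmxBr mul_scalar_mx mul_mx_scalar -scalar_mxM.
  rewrite !linearB /= !mxtraceZ htr mxtrace_scalar.
  by rewrite -mulr_natr; ring.
set W := U *m G.
have WW : W *m map_mx Num.conj (W^T) = U *m G *m G *m Ut.
  by rewrite /W ctM hG !mulmxA.
have key : \tr (G *m G) <= \tr (G *m G *m P) * T.
  have -> : \tr (G *m G *m P) = \sum_i (W *m map_mx Num.conj (W^T)) i i * d 0 i.
    rewrite hPd !mulmxA mxtrace_mulC !mulmxA -/Ut -[U *m G *m G *m Ut]WW.
    by rewrite /mxtrace; apply: eq_bigr => i _; rewrite mul_mx_diag mxE.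
  have -> : \tr (G *m G) = \sum_i (W *m map_mx Num.conj (W^T)) i i.
    rewrite WW -[G *m G]mulmx1 -UtU mulmxA mxtrace_mulC !mulmxA //.
  rewrite mulr_suml; apply: ler_sum => i _.
  rewrite -mulrA -[X in X <= _]mulr1; apply: ler_wpM2l => //; exact: diag_ge0.
set X := \tr (H *m H *m P).
set h2 := \tr (H *m H).
have mu2 : 0 <= mu ^+ 2.
  by rewrite expr2 -{2}hmu -normCK exprn_ge0.
have key2 : h2 <= (X - mu ^+ 2 * S) * T.
  rewrite -GGP; apply: le_trans key; rewrite GG lerDl.
  by apply: mulr_ge0 => //; rewrite ler0n.
have S0 : S != 0 by exact: lt0r_neq0.
have T0 : T != 0 by exact: lt0r_neq0.
have -> : X / S - Y ^+ 2 / S ^+ 2 = ((X - mu ^+ 2 * S) * T) / (S * T).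
  by rewrite /mu; field; rewrite T0 S0.
apply: ler_wpM2r key2.
by rewrite invr_ge0 mulr_ge0 // ltW.
Qed.
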